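(* Let $0<q<1$ and define the positive measure $\mu$ on $\mathbb C$ by $$\int_{\mathbb C} f\,d\mu=\sum_{k=0}^\infty\frac{q^k}{(q;q)_k}\,\frac{1}{2\pi}\int_0^{2\pi}f\big(q^{k/2}e^{i\theta}\big)\,d\theta .$$ Then for all $m,n,s,t\in\mathbb N_0$, $$\int_{\mathbb C}H_{m,n}(z,\bar z|q)\,\overline{H_{s,t}(z,\bar z|q)}\,d\mu(z)=\frac{q^{mn}(q;q)_m(q;q)_n}{(q;q)_\infty}\,\delta_{m,s}\delta_{n,t}.$$
   Context: $(a;q)_n=\prod_{j=0}^{n-1}(1-aq^j)$, $(a;q)_\infty=\prod_{j\ge0}(1-aq^j)$, $\left[{m\atop k}\right]_q=\frac{(q;q)_m}{(q;q)_k(q;q)_{m-k}}$, $m\wedge n=\min\{m,n\}$. The first $q$-$2D$-Hermite polynomials are $$H_{m,n}(z_1,z_2|q)=\sum_{k=0}^{m\wedge n}\left[{m\atop k}\right]_q\left[{n\atop k}\right]_q(-1)^kq^{\binom k2}(q;q)_k\,z_1^{m-k}z_2^{n-k},$$ and $H_{m,n}(z,\bar z|q)$ denotes this polynomial evaluated at $z_1=z$, $z_2=\bar z$. *)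

(* Defs.v *)
From Stdlib Require Import Reals.
Open Scope R_scope.

(* Complex numbers as pairs (real part, imaginary part). *)
Definition C : Type := (R * R)%type.
Definition Cadd (z w : C) : C := (fst z + fst w, snd z + snd w).
Definition Cmul (z w : C) : C :=
  (fst z * fst w - snd z * snd w, fst z * snd w + snd z * fst w).
Definition Cconj (z : C) : C := (fst z, - snd z).
Definition Cscale (r : R) (z : C) : C := (r * fst z, r * snd z).
Fixpoint Cpow (z : C) (n : nat) : C :=
  match n with O => (1, 0) | S n' => Cmul z (Cpow z n') end.
Fixpoint Csum (f : nat -> C) (n : nat) : C :=
  match n with O => f O | S n' => Cadd (Csum f n') (f n) end.

Fixpoint qpoch (a q : R) (n : nat) : R :=
  match n with O => 1 | S n' => qpoch a q n' * (1 - a * q ^ n') end.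

Definition qbin (q : R) (m k : nat) : R :=
  qpoch q q m / (qpoch q q k * qpoch q q (m - k)).

Definition binom2 (k : nat) : nat := (k * (k - 1) / 2)%nat.

Definition qHermite2D (q : R) (m n : nat) (z1 z2 : C) : C :=
  Csum (fun k => Cscale (qbin q m k * qbin q n k * (-1) ^ k * q ^ (binom2 k)
                          * qpoch q q k)
                        (Cmul (Cpow z1 (m - k)) (Cpow z2 (n - k))))
       (Nat.min m n).

Definition zpt (q : R) (k : nat) (theta : R) : C :=
  (Rpower q (INR k / 2) * cos theta, Rpower q (INR k / 2) * sin theta).

Definition angular_mean (f : R -> C) (v : C) : Prop :=
  exists (pre : Riemann_integrable (fun t => fst (f t)) 0 (2 * PI))
         (pim : Riemann_integrable (fun t => snd (f t)) 0 (2 * PI)),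
    v = (RiemannInt pre / (2 * PI), RiemannInt pim / (2 * PI)).

Definition qpoch_inf (q l : R) : Prop := Un_cv (fun n => qpoch q q n) l.

Definition mu_integral (q : R) (f : C -> C) (v : C) : Prop :=
  exists a : nat -> C,
    (forall k, angular_mean (fun theta => f (zpt q k theta)) (a k)) /\
    infinite_sum (fun k => q ^ k / qpoch q q k * fst (a k)) (fst v) /\
    infinite_sum (fun k => q ^ k / qpoch q q k * snd (a k)) (snd v).

Definition kron (i j : nat) : R := if Nat.eqb i j then 1 else 0.

(* Main.v *)
Require Import Defs.
From Stdlib Require Import Reals.
From Stdlib Require Import Lra Lia FunctionalExtensionality.
From Coquelicot Require Import Coquelicot.
Import Defs.
Open Scope R_scope.

Fixpoint sm (f : nat -> R) (n : nat) : R :=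
  match n with O => 0 | S n' => sm f n' + f n' end.
Fixpoint prd (f : nat -> R) (n : nat) : R :=
  match n with O => 1 | S n' => prd f n' * f n' end.

Lemma sm_ext f g n : (forall i, (i < n)%nat -> f i = g i) -> sm f n = sm g n.
Proof. induction n; simpl; intros; auto. rewrite IHn, H; auto. Qed.
Lemma prd_ext f g n : (forall i, (i < n)%nat -> f i = g i) -> prd f n = prd g n.
Proof. induction n; simpl; intros; auto. rewrite IHn, H; auto. Qed.
Lemma sm_add f g n : sm (fun i => f i + g i) n = sm f n + sm g n.
Proof. induction n; simpl; [ring|]. rewrite IHn; ring. Qed.
Lemma sm_scal c f n : sm (fun i => c * f i) n = c * sm f n.
Proof. induction n; simpl; [ring|]. rewrite IHn; ring. Qed.
Lemma sm_shift f n : sm f (S n) = f O + sm (fun i => f (S i)) n.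
Proof. induction n; simpl in *; [ring|]. rewrite IHn; ring. Qed.
Lemma sm_zero f n : (forall i, (i < n)%nat -> f i = 0) -> sm f n = 0.
Proof. intros. rewrite (sm_ext f (fun _ => 0)); auto. induction n; simpl; auto. rewrite IHn; auto. ring. Qed.
Lemma sm_swap f M N : sm (fun i => sm (fun j => f i j) N) M = sm (fun j => sm (fun i => f i j) M) N.
Proof.
  induction M; simpl.
  - symmetry; apply sm_zero; auto.
  - rewrite IHM. rewrite <- sm_add. reflexivity.
Qed.
Lemma sm_extend f n k : (forall i, (n <= i < n + k)%nat -> f i = 0) -> sm f (n + k) = sm f n.
Proof.
  induction k; intros; simpl. rewrite Nat.add_0_r; auto.
  rewrite Nat.add_succ_r. simpl. rewrite IHk, H; [ring|lia|]. intros; apply H; lia.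
Qed.

Section SQ.
Variable q : R.
Hypothesis hq0 : 0 < q.
Hypothesis hq1 : q < 1.

Fixpoint gb (n k : nat) : R :=
  match n, k with
  | O, O => 1
  | O, S _ => 0
  | S _, O => 1
  | S n', S k' => q ^ (S k') * gb n' (S k') + gb n' k'
  end.

Lemma gb_zero n k : (n < k)%nat -> gb n k = 0.
Proof.
  revert k; induction n; intros [|k] h; simpl; try lia; auto.
  rewrite !IHn by lia. ring.
Qed.

Lemma qpoch_pos n : 0 < qpoch q q n.
Proof.
  induction n; simpl; [lra|].
  apply Rmult_lt_0_compat; auto.
  assert (0 < q ^ n <= 1). { split. apply pow_lt; lra. rewrite <- (pow1 n). apply pow_incr. lra. }
  nra.
Qed.

Lemma qbin_0 n : qbin q n 0 = 1.
Proof. unfold qbin. rewrite Nat.sub_0_r. simpl. assert (h := qpoch_pos n). field. lra. Qed.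

Lemma qbin_n n : qbin q n n = 1.
Proof. unfold qbin. rewrite Nat.sub_diag. simpl. assert (h := qpoch_pos n). field. lra. Qed.

Lemma gb_qbin n k : (k <= n)%nat -> gb n k = qbin q n k.
Proof.
  revert k; induction n; intros [|k] h.
  - simpl. rewrite qbin_0. auto.
  - lia.
  - simpl. rewrite qbin_0. auto.
  - simpl gb. destruct (Nat.eq_dec k n) as [->|hk].
    + rewrite gb_zero by lia. rewrite IHn by lia. rewrite !qbin_n. ring.
    + rewrite !IHn by lia. unfold qbin.
      replace (S n - S k)%nat with (S (n - S k)) by lia.
      replace (n - k)%nat with (S (n - S k)) by lia.
      simpl.
      assert (h1 := qpoch_pos n). assert (h2 := qpoch_pos k). assert (h3 := qpoch_pos (n - S k)).
      assert (e : q ^ (n - S k) * q ^ S k = q ^ n).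
      { rewrite <- pow_add. f_equal. lia. }
      assert (0 < q ^ k <= 1). { split. apply pow_lt; lra. rewrite <- (pow1 k). apply pow_incr. lra. }
      assert (0 < q ^ (n - S k) <= 1). { split. apply pow_lt; lra. rewrite <- (pow1 (n - S k)). apply pow_incr. lra. }
      assert (q * q ^ k < 1) by nra. assert (q * q ^ (n - S k) < 1) by nra.
      simpl in e.
      rewrite <- e. field. repeat split; lra.
Qed.

Lemma binom2_S i : binom2 (S i) = (binom2 i + i)%nat.
Proof.
  unfold binom2. replace (S i * (S i - 1))%nat with (i * (i - 1) + i * 2)%nat.
  - rewrite Nat.div_add by lia. reflexivity.
  - destruct i; simpl; lia.
Qed.

Definition wq (i : nat) : R := (-1) ^ i * q ^ (binom2 i).

Lemma w_S i : wq (S i) = - (wq i * q ^ i).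
Proof. unfold wq. rewrite binom2_S, pow_add. simpl. ring. Qed.

Fixpoint px (n : nat) (x : R) : R :=
  match n with O => 1 | S n' => (1 - x) * px n' (q * x) end.

Definition Tn n x := sm (fun i => gb n i * wq i * x ^ i) (S n).

Lemma gb_n0 n : gb n 0 = 1.
Proof. destruct n; reflexivity. Qed.

Lemma rothe n x : Tn n x = px n x.
Proof.
  revert x; induction n; intro x.
  - unfold Tn. simpl. unfold wq. simpl. ring.
  - simpl px. rewrite <- IHn. unfold Tn.
    rewrite sm_shift.
    rewrite (sm_ext _ (fun j => gb n (S j) * wq (S j) * (q * x) ^ (S j) + (- x) * (gb n j * wq j * (q * x) ^ j))).
    2:{ intros j _. simpl gb. rewrite w_S. rewrite !Rpow_mult_distr. simpl. ring. }
    rewrite sm_add, sm_scal.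
    replace (sm (fun j => gb n (S j) * wq (S j) * (q * x) ^ S j) (S n))
      with (sm (fun i => gb n i * wq i * (q * x) ^ i) (S (S n)) - gb n 0 * wq 0 * (q*x)^0).
    2:{ rewrite (sm_shift _ (S n)). ring. }
    simpl sm at 1. rewrite (gb_zero n (S n)) by lia.
    simpl gb. rewrite gb_n0. unfold wq. simpl. ring.
Qed.

Definition yq := / q.
Lemma qy c : q * yq ^ S c = yq ^ c.
Proof. unfold yq. simpl. rewrite <- Rmult_assoc, Rinv_r by lra. ring. Qed.

Lemma px_vanish n c : (c < n)%nat -> px n (yq ^ c) = 0.
Proof.
  revert c; induction n; intros c h; [lia|].
  simpl. destruct c as [|c].
  - simpl. ring.
  - rewrite qy. rewrite IHn by lia. ring.
Qed.

Definition Dop n (f : nat -> R) := sm (fun i => gb n i * wq i * f i) (S n).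
Definition pr (a : nat -> R) b u := prd (fun l => 1 - a l * u) b.

Lemma D_lin n f g k : Dop n (fun i => f i - k * g i) = Dop n f - k * Dop n g.
Proof.
  unfold Dop. rewrite <- sm_scal.
  replace (sm (fun i => gb n i * wq i * f i) (S n) - sm (fun i => k * (gb n i * wq i * g i)) (S n))
   with (sm (fun i => gb n i * wq i * f i) (S n) + (-1) * sm (fun i => k * (gb n i * wq i * g i)) (S n)) by ring.
  rewrite <- sm_scal, <- sm_add. apply sm_ext. intros; ring.
Qed.

Lemma D_base n a c : Dop n (fun i => (yq ^ i) ^ c * pr a 0 (yq ^ i)) = px n (yq ^ c).
Proof.
  rewrite <- rothe. unfold Dop, Tn. apply sm_ext. intros i _. unfold pr. simpl.
  rewrite <- !pow_mult. rewrite Nat.mul_comm. ring.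
Qed.

Lemma D_step n a b c :
  Dop n (fun i => (yq ^ i) ^ c * pr a (S b) (yq ^ i)) =
  Dop n (fun i => (yq ^ i) ^ c * pr a b (yq ^ i)) - a b * Dop n (fun i => (yq ^ i) ^ (S c) * pr a b (yq ^ i)).
Proof.
  rewrite <- D_lin. unfold Dop. apply sm_ext. intros i _. unfold pr. simpl. ring.
Qed.

Lemma D_V n a b : forall c, (c + b < n)%nat -> Dop n (fun i => (yq ^ i) ^ c * pr a b (yq ^ i)) = 0.
Proof.
  induction b; intros c h.
  - rewrite (D_base n a c). rewrite px_vanish by lia. reflexivity.
  - rewrite D_step. rewrite !IHb by lia. ring.
Qed.

Lemma D_W n a b : forall c, (c + b = n)%nat ->
  Dop n (fun i => (yq ^ i) ^ c * pr a b (yq ^ i)) = (-1) ^ b * prd a b * px n (yq ^ n).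
Proof.
  induction b; intros c h.
  - rewrite (D_base n a c). replace c with n by lia. simpl. ring.
  - rewrite D_step. rewrite D_V by lia. rewrite IHb by lia. simpl. ring.
Qed.

Lemma qyk k : q ^ k * yq ^ k = 1.
Proof. rewrite <- Rpow_mult_distr. unfold yq. rewrite Rinv_r by lra. apply pow1. Qed.

Lemma top_val m n : (-1) ^ n * prd (fun l => q ^ (m + l + 1)) n * px n (yq ^ n) = q ^ (m * n) * qpoch q q n.
Proof.
  induction n.
  - simpl. rewrite Nat.mul_0_r. simpl. ring.
  - replace (px (S n) (yq ^ S n)) with ((1 - yq ^ S n) * px n (yq ^ n)) by (change (px (S n) (yq ^ S n)) with ((1 - yq ^ S n) * px n (q * yq ^ S n)); rewrite qy; reflexivity).
    change (prd (fun l => q ^ (m + l + 1)) (S n)) with (prd (fun l => q ^ (m + l + 1)) n * q ^ (m + n + 1)).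
    change (qpoch q q (S n)) with (qpoch q q n * (1 - q * q ^ n)).
    replace (q ^ (m + n + 1)) with (q ^ m * q ^ S n) by (rewrite <- pow_add; f_equal; lia).
    replace (m * S n)%nat with (m * n + m)%nat by lia.
    rewrite (pow_add q (m * n) m).
    assert (e := qyk (S n)).
    transitivity (((-1) ^ n * prd (fun l : nat => q ^ (m + l + 1)) n * px n (yq ^ n)) * (q ^ m * (q ^ S n * yq ^ S n - q ^ S n))).
    { change ((-1) ^ S n) with (-1 * (-1) ^ n). ring. }
    rewrite IHn, e. change (q ^ S n) with (q * q ^ n). ring.
Qed.

Lemma qpoch_add N b : qpoch q q (N + b) = qpoch q q N * prd (fun l => 1 - q ^ (N + l + 1)) b.
Proof.
  induction b.
  - rewrite Nat.add_0_r. simpl. ring.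
  - rewrite Nat.add_succ_r. simpl. rewrite IHb.
    replace (q ^ (N + b + 1)) with (q * q ^ (N + b)) by (rewrite Nat.add_1_r; reflexivity). ring.
Qed.

Lemma prd_zero f n k : (k < n)%nat -> f k = 0 -> prd f n = 0.
Proof.
  induction n; intros h hf; [lia|]. simpl.
  destruct (Nat.eq_dec k n) as [->|]. rewrite hf; ring. rewrite IHn by (auto; lia). ring.
Qed.

Definition cc m n i := qbin q m i * qbin q n i * (-1) ^ i * q ^ (binom2 i) * qpoch q q i.

Definition Asum m n b := sm (fun i => cc m n i * qpoch q q (m + b - i)) (S (Nat.min m n)).

Lemma A_D m n b : (n <= m + b)%nat ->
  Asum m n b = qpoch q q m * Dop n (fun i => (yq ^ i) ^ 0 * pr (fun l => q ^ (m + l + 1)) b (yq ^ i)).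
Proof.
  intros hb.
  assert (key : forall i, (i <= m)%nat -> (i <= n)%nat ->
     cc m n i * qpoch q q (m + b - i) =
     qpoch q q m * (gb n i * wq i * ((yq ^ i) ^ 0 * pr (fun l => q ^ (m + l + 1)) b (yq ^ i)))).
  { intros i him hin. rewrite gb_qbin by auto. unfold cc, wq.
    replace (m + b - i)%nat with ((m - i) + b)%nat by lia.
    rewrite qpoch_add.
    replace (pr (fun l => q ^ (m + l + 1)) b (yq ^ i)) with (prd (fun l => 1 - q ^ (m - i + l + 1)) b).
    2:{ unfold pr. apply prd_ext. intros l _.
        replace (m + l + 1)%nat with ((m - i + l + 1) + i)%nat by lia.
        rewrite (pow_add q (m - i + l + 1) i). rewrite (Rmult_assoc (q ^ (m - i + l + 1))). rewrite qyk. ring. }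
    unfold qbin. replace (i - i)%nat with 0%nat by lia.
    assert (h1 := qpoch_pos m). assert (h2 := qpoch_pos i). assert (h3 := qpoch_pos (m - i)).
    assert (h4 := qpoch_pos (n - i)). simpl. field. repeat split; lra. }
  unfold Asum, Dop. rewrite <- sm_scal.
  destruct (Nat.le_gt_cases n m) as [hnm|hnm].
  - rewrite Nat.min_r by auto. apply sm_ext. intros i hi. apply key; lia.
  - rewrite Nat.min_l by lia.
    replace (S n) with (S m + (n - m))%nat by lia.
    rewrite sm_extend.
    + apply sm_ext. intros i hi. apply key; lia.
    + intros i hi. unfold pr.
      rewrite (prd_zero _ b (i - m - 1)); [ring| lia |].
      replace (m + (i - m - 1) + 1)%nat with i by lia. rewrite qyk. ring.
Qed.

Lemma A_val m n b : (b <= n)%nat -> (n <= m + b)%nat ->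
  Asum m n b = if Nat.eqb b n then q ^ (m * n) * qpoch q q m * qpoch q q n else 0.
Proof.
  intros h1 h2. rewrite A_D by auto.
  destruct (Nat.eqb_spec b n) as [->|hne].
  - rewrite D_W by lia. rewrite top_val. ring.
  - rewrite D_V by lia. ring.
Qed.

Definition Fin m n s t := sm (fun i => sm (fun j => cc m n i * cc s t j * qpoch q q (m + t - i - j)) (S (Nat.min s t))) (S (Nat.min m n)).

Lemma cc_0 m n : cc m n 0 = 1.
Proof. unfold cc. rewrite !qbin_0. simpl. ring. Qed.

Lemma Fin_le m n s t : (t <= n)%nat -> (m + t = n + s)%nat ->
  Fin m n s t = q ^ (m * n) * qpoch q q m * qpoch q q n * kron m s * kron n t.
Proof.
  intros h1 h2. unfold Fin. rewrite sm_swap.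
  rewrite (sm_ext _ (fun j => cc s t j * Asum m n (t - j))).
  2:{ intros j hj. unfold Asum. rewrite <- sm_scal. apply sm_ext. intros i hi.
      replace (m + t - i - j)%nat with (m + (t - j) - i)%nat by lia. ring. }
  rewrite sm_shift.
  rewrite sm_zero.
  2:{ intros j hj. rewrite A_val by lia. replace (Nat.eqb (t - S j) n) with false.
      ring. symmetry. apply Nat.eqb_neq. lia. }
  rewrite cc_0. rewrite A_val by lia. rewrite Nat.sub_0_r.
  unfold kron. destruct (Nat.eqb_spec t n) as [->|hne].
  - replace s with m by lia. rewrite !Nat.eqb_refl. ring.
  - destruct (Nat.eqb_spec n t); [lia|]. ring.
Qed.

Lemma Fin_sym m n s t : (m + t = n + s)%nat -> Fin m n s t = Fin s t m n.
Proof.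
  intros h. unfold Fin. rewrite sm_swap. apply sm_ext. intros j hj. apply sm_ext. intros i hi.
  replace (s + n - j - i)%nat with (m + t - i - j)%nat by lia. ring.
Qed.

Lemma Fin_val m n s t : (m + t = n + s)%nat ->
  Fin m n s t = q ^ (m * n) * qpoch q q m * qpoch q q n * kron m s * kron n t.
Proof.
  intros h. destruct (Nat.le_gt_cases t n).
  - apply Fin_le; auto.
  - rewrite Fin_sym by auto. rewrite Fin_le by lia.
    unfold kron. destruct (Nat.eqb_spec t n); [lia|]. destruct (Nat.eqb_spec n t); [lia|]. ring.
Qed.
End SQ.

Section SP.
Variable q : R.
Hypothesis hq0 : 0 < q.
Hypothesis hq1 : q < 1.

Lemma pw1 x n : 0 <= x <= 1 -> 0 <= x ^ n <= 1.
Proof. intros h. split. apply pow_le; lra. rewrite <- (pow1 n). apply pow_incr. lra. Qed.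

Lemma qpow_bnd n : 0 < q ^ n <= 1.
Proof. split. apply pow_lt; lra. apply pw1; lra. Qed.

Lemma qpoch_pos2 n : 0 < qpoch q q n.
Proof.
  induction n; simpl; [lra|].
  apply Rmult_lt_0_compat; auto.
  assert (q * q ^ n < 1).
  { assert (0 < q ^ n <= 1) by (apply qpow_bnd).
    nra. }
  lra.
Qed.

Definition Eterm (x : R) (k : nat) : R := x ^ k / qpoch q q k.

Lemma E_ex x : 0 < x < 1 -> ex_series (Eterm x).
Proof.
  intros hx. apply ex_series_Rabs.
  apply ex_series_DAlembert with x; [lra| |].
  - intro n. unfold Eterm. apply Rgt_not_eq, Rlt_gt, Rdiv_lt_0_compat.
    apply pow_lt; lra. apply qpoch_pos2.
  - apply is_lim_seq_ext with (fun n => x / (1 - q * q ^ n)).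
    + intro n. unfold Eterm. simpl.
      assert (h1 := qpoch_pos2 n).
      assert (q * q ^ n < 1).
      { assert (0 < q ^ n <= 1) by (apply qpow_bnd). nra. }
      assert (0 < x ^ n) by (apply pow_lt; lra).
      rewrite Rabs_pos_eq.
      * field. split; lra.
      * apply Rmult_le_pos.
        { apply Rmult_le_pos. apply Rmult_le_pos; lra.
          apply Rlt_le, Rinv_0_lt_compat; apply Rmult_lt_0_compat; lra. }
        apply Rlt_le, Rinv_0_lt_compat, Rdiv_lt_0_compat; lra.
    + replace (Finite x) with (Rbar_div x (1 - q * 0)).
      2:{ simpl. f_equal. field. }
      apply is_lim_seq_div'.
      * apply is_lim_seq_const.
      * apply is_lim_seq_minus'. apply is_lim_seq_const.
        apply (is_lim_seq_mult' (fun _ => q) (fun n => q ^ n)). apply is_lim_seq_const. apply is_lim_seq_geom. rewrite Rabs_pos_eq; lra.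
      * lra.
Qed.

Definition Fser x := Series (Eterm x).

Lemma F_correct x : 0 < x < 1 -> is_series (Eterm x) (Fser x).
Proof. intros; apply Series_correct, E_ex; auto. Qed.

Lemma F_rec x : 0 < x < 1 -> Fser (q * x) = (1 - x) * Fser x.
Proof.
  intros hx.
  assert (hqx : 0 < q * x < 1) by nra.
  assert (H := is_series_minus _ _ _ _ (F_correct x hx) (F_correct _ hqx)).
  assert (H2 : is_series (fun k => x * Eterm x k) (Fser x - Fser (q * x))).
  { apply is_series_ext with (fun k => (fun n => plus (Eterm x n) (opp (Eterm (q * x) n))) (S k)).
    - intro k. unfold plus, opp; simpl. unfold Eterm. simpl.
      assert (h1 := qpoch_pos2 k). assert (h2 := qpow_bnd k).
      assert (q * q ^ k < 1) by nra.
      rewrite Rpow_mult_distr. field. split; lra.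
    - apply (is_series_incr_1 (fun n => plus (Eterm x n) (opp (Eterm (q * x) n)))).
      replace (Fser x - Fser (q * x)) with (plus (Fser x) (opp (Fser (q * x)))).
      2:{ unfold plus, opp; simpl. ring. }
      assert (e : plus (Eterm x 0) (opp (Eterm (q * x) 0)) = zero).
      { unfold plus, opp, zero, Eterm; simpl. field. }
      rewrite e, plus_zero_r. exact H. }
  assert (H3 := is_series_scal_l x _ _ (F_correct x hx)).
  apply is_series_unique in H2. apply is_series_unique in H3.
  unfold scal in H3; simpl in H3. unfold mult in H3; simpl in H3.
  rewrite H2 in H3. lra.
Qed.

Definition Gser j := Fser (q ^ S j).

Lemma G_rec n : Gser n = Fser q * qpoch q q n.
Proof.
  induction n.
  - unfold Gser. simpl. rewrite Rmult_1_r. ring.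
  - unfold Gser in *. replace (q ^ S (S n)) with (q * q ^ S n) by (simpl; ring).
    rewrite F_rec. rewrite IHn. simpl. ring.
    split. apply pow_lt; lra. assert (h := qpow_bnd n). simpl. nra.
Qed.

Lemma Series_nonneg a : (forall n, 0 <= a n) -> ex_series a -> 0 <= Series a.
Proof.
  intros h ex.
  assert (Series (fun n => 0 * a n) <= Series a).
  { apply Series_le; auto. intro n. split; [lra|]. rewrite Rmult_0_l; auto. }
  rewrite Series_scal_l in H. lra.
Qed.

Lemma E_pos x k : 0 < x -> 0 < Eterm x k.
Proof. intros. unfold Eterm. apply Rdiv_lt_0_compat. apply pow_lt; lra. apply qpoch_pos2. Qed.

Lemma F_split x : 0 < x < 1 -> Fser x = 1 + Series (fun k => Eterm x (S k)).
Proof.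
  intros hx. unfold Fser. rewrite Series_incr_1. unfold Eterm at 1. simpl. field.
  apply E_ex; auto.
Qed.

Lemma ex_tail x : 0 < x < 1 -> ex_series (fun k => Eterm x (S k)).
Proof. intros. apply (ex_series_incr_1 (Eterm x)). apply E_ex; auto. Qed.

Lemma G_bounds n : 1 <= Gser n <= 1 + q ^ n * (Fser q - 1).
Proof.
  assert (hx : 0 < q ^ S n < 1).
  { split. apply pow_lt; lra. assert (h := qpow_bnd n). simpl. nra. }
  unfold Gser. rewrite !F_split; auto.
  split.
  - assert (0 <= Series (fun k => Eterm (q ^ S n) (S k))).
    { apply Series_nonneg. intro; apply Rlt_le, E_pos; lra. apply ex_tail; auto. }
    lra.
  - cut (Series (fun k => Eterm (q ^ S n) (S k)) <= q ^ n * Series (fun k => Eterm q (S k))).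
    { intros; lra. }
    rewrite <- Series_scal_l.
    apply Series_le.
    + intro k. split. apply Rlt_le, E_pos; lra.
      unfold Eterm. unfold Rdiv. rewrite <- Rmult_assoc. apply Rmult_le_compat_r.
      apply Rlt_le, Rinv_0_lt_compat, qpoch_pos2.
      assert (h1 : (q ^ S n) ^ k <= q ^ k).
      { apply pow_incr. split. apply pow_le; lra. assert (h := qpow_bnd n). simpl. nra. }
      assert (h2 := qpow_bnd n). assert (h3 := qpow_bnd k). simpl.
      assert (0 <= (q ^ n * q) ^ k) by (apply pow_le; nra).
      replace (q ^ S k) with (q * q ^ k) by reflexivity.
      change (q ^ S n) with (q * q ^ n) in h1.
      assert (0 <= q * q ^ n) by nra.
      assert (q * q ^ n * (q * q ^ n) ^ k <= q * q ^ n * q ^ k) by (apply Rmult_le_compat_l; auto).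
      nra.
    + apply (ex_series_scal_l (q ^ n) (fun k => Eterm q (S k))). apply ex_tail; lra.
Qed.

Lemma Fq_ge1 : 1 <= Fser q.
Proof. assert (h := G_bounds 0). unfold Gser in h. simpl in h. rewrite Rmult_1_r in h. lra. Qed.

Lemma qpoch_lim : Un_cv (fun n => qpoch q q n) (/ Fser q).
Proof.
  apply is_lim_seq_Reals.
  assert (hF := Fq_ge1).
  apply is_lim_seq_ext with (fun n => Gser n / Fser q).
  { intro n. rewrite G_rec. field. lra. }
  replace (/ Fser q) with (1 / Fser q) by (field; lra).
  apply (is_lim_seq_div' (fun n => Gser n) (fun _ => Fser q) 1 (Fser q)); [| apply is_lim_seq_const | lra].
  apply is_lim_seq_le_le with (fun _ => 1) (fun n => 1 + q ^ n * (Fser q - 1)).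
  - apply G_bounds.
  - apply is_lim_seq_const.
  - replace (Finite 1) with (Finite (1 + 0 * (Fser q - 1))) by (f_equal; ring).
    apply is_lim_seq_plus'. apply is_lim_seq_const.
    apply is_lim_seq_mult'. apply is_lim_seq_geom. rewrite Rabs_pos_eq; lra.
    apply is_lim_seq_const.
Qed.
End SP.

Lemma cpow_polar r th a : Cpow (r * cos th, r * sin th) a = (r ^ a * cos (INR a * th), r ^ a * sin (INR a * th)).
Proof.
  induction a.
  - simpl. rewrite Rmult_0_l, cos_0, sin_0. f_equal; ring.
  - simpl Cpow. rewrite IHa. unfold Cmul. simpl fst; simpl snd.
    rewrite S_INR. replace ((INR a + 1) * th) with (th + INR a * th) by ring.
    rewrite cos_plus, sin_plus. simpl. f_equal; ring.
Qed.

Lemma polar_mul R1 R2 a b :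
  Cmul (R1 * cos a, R1 * sin a) (R2 * cos b, R2 * sin b) = (R1 * R2 * cos (a + b), R1 * R2 * sin (a + b)).
Proof. unfold Cmul; simpl. rewrite cos_plus, sin_plus. f_equal; ring. Qed.

Lemma conj_polar r th : Cconj (r * cos th, r * sin th) = (r * cos (- th), r * sin (- th)).
Proof. unfold Cconj; simpl. rewrite cos_neg, sin_neg. f_equal; ring. Qed.

Lemma Csum_sm f N : Csum f N = (sm (fun k => fst (f k)) (S N), sm (fun k => snd (f k)) (S N)).
Proof.
  induction N.
  - simpl. destruct (f O); simpl. f_equal; ring.
  - simpl Csum. rewrite IHN. unfold Cadd. simpl. reflexivity.
Qed.

Lemma sm_mult_r f c n : sm (fun k => f k * c) n = sm f n * c.
Proof. induction n; simpl; [ring|]. rewrite IHn; ring. Qed.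

Definition hp (c : nat -> R) m n r := sm (fun k => c k * (r ^ (m - k) * r ^ (n - k))) (S (Nat.min m n)).

Lemma H_polar q m n r th :
  qHermite2D q m n (r * cos th, r * sin th) (Cconj (r * cos th, r * sin th)) =
  (hp (fun k => qbin q m k * qbin q n k * (-1) ^ k * q ^ (binom2 k) * qpoch q q k) m n r * cos ((INR m - INR n) * th),
   hp (fun k => qbin q m k * qbin q n k * (-1) ^ k * q ^ (binom2 k) * qpoch q q k) m n r * sin ((INR m - INR n) * th)).
Proof.
  unfold qHermite2D. rewrite Csum_sm. unfold hp. rewrite <- !sm_mult_r.
  rewrite conj_polar.
  f_equal; apply sm_ext; intros k hk;
  rewrite !cpow_polar, polar_mul;
  replace (INR (m - k) * th + INR (n - k) * - th) with ((INR m - INR n) * th)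
    by (rewrite !minus_INR by lia; ring);
  unfold Cscale; simpl; ring.
Qed.

Lemma prod_conj P1 P2 a b :
  Cmul (P1 * cos a, P1 * sin a) (Cconj (P2 * cos b, P2 * sin b)) = (P1 * P2 * cos (a - b), P1 * P2 * sin (a - b)).
Proof. rewrite conj_polar, polar_mul. unfold Rminus. reflexivity. Qed.

Lemma am_gen f g vf vg : is_RInt f 0 (2 * PI) vf -> is_RInt g 0 (2 * PI) vg ->
  angular_mean (fun th => (f th, g th)) (vf / (2 * PI), vg / (2 * PI)).
Proof.
  intros hf hg.
  exists (ex_RInt_Reals_0 _ _ _ (ex_intro _ _ hf)).
  exists (ex_RInt_Reals_0 _ _ _ (ex_intro _ _ hg)).
  simpl. rewrite <- (RInt_Reals f 0 (2*PI)), <- (RInt_Reals g 0 (2*PI)). rewrite (is_RInt_unique _ _ _ _ hf), (is_RInt_unique _ _ _ _ hg). reflexivity.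
Qed.

Lemma sin_int z : sin (2 * PI * IZR z) = 0.
Proof. apply sin_eq_0_1. exists (2 * z)%Z. rewrite mult_IZR. simpl. ring. Qed.
Lemma cos_int z : cos (2 * PI * IZR z) = 1.
Proof.
  replace (2 * PI * IZR z) with (2 * (IZR z * PI)) by ring.
  rewrite cos_2a_sin. rewrite sin_eq_0_1 by (exists z; reflexivity). ring.
Qed.

Lemma isR_eq (f : R -> R) a b (v w : R) : is_RInt f a b v -> v = w -> is_RInt f a b w.
Proof. intros; subst; auto. Qed.

Lemma am_nonzero P z : IZR z <> 0 ->
  angular_mean (fun th => (P * cos (IZR z * th), P * sin (IZR z * th))) (0, 0).
Proof.
  intros hz.
  replace (0, 0) with (0 / (2 * PI), 0 / (2 * PI)) by (f_equal; field; apply PI_neq0).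
  apply am_gen.
  - assert (H : is_RInt (fun th => P * cos (IZR z * th)) 0 (2 * PI)
       (minus ((fun x => P * sin (IZR z * x) / IZR z) (2 * PI)) ((fun x => P * sin (IZR z * x) / IZR z) 0))).
    { apply (is_RInt_derive (fun x => P * sin (IZR z * x) / IZR z)).
      + intros x _. auto_derive; auto. field; auto.
      + intros x _. apply (@ex_derive_continuous R_AbsRing R_NormedModule (fun th => P * cos (IZR z * th))). auto_derive; auto. }
    apply (isR_eq _ _ _ _ _ H).
    unfold minus, plus, opp; simpl. rewrite Rmult_0_r, sin_0.
    replace (IZR z * (2 * PI)) with (2 * PI * IZR z) by ring. rewrite sin_int. field; auto.
  - assert (H : is_RInt (fun th => P * sin (IZR z * th)) 0 (2 * PI)
       (minus ((fun x => - P * cos (IZR z * x) / IZR z) (2 * PI)) ((fun x => - P * cos (IZR z * x) / IZR z) 0))).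
    { apply (is_RInt_derive (fun x => - P * cos (IZR z * x) / IZR z)).
      + intros x _. auto_derive; auto. field; auto.
      + intros x _. apply (@ex_derive_continuous R_AbsRing R_NormedModule (fun th => P * sin (IZR z * th))). auto_derive; auto. }
    apply (isR_eq _ _ _ _ _ H).
    unfold minus, plus, opp; simpl. rewrite Rmult_0_r, cos_0.
    replace (IZR z * (2 * PI)) with (2 * PI * IZR z) by ring. rewrite cos_int. field; auto.
Qed.

Lemma am_zero P : angular_mean (fun th => (P * cos (0 * th), P * sin (0 * th))) (P, 0).
Proof.
  replace (P, 0) with (P * (2 * PI) / (2 * PI), 0 / (2 * PI)).
  2:{ f_equal; field; apply PI_neq0. }
  apply am_gen.
  - eapply isR_eq. apply (is_RInt_ext (fun _ : R => P)).
    intros x _. rewrite Rmult_0_l. rewrite cos_0. rewrite Rmult_1_r. reflexivity.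
    apply is_RInt_const.
    unfold scal; simpl; unfold mult; simpl. ring.
  - eapply isR_eq. apply (is_RInt_ext (fun _ : R => 0)).
    intros x _. rewrite Rmult_0_l, sin_0, Rmult_0_r. reflexivity.
    apply is_RInt_const.
    unfold scal; simpl; unfold mult; simpl. ring.
Qed.

Lemma ser_eq (a : nat -> R) v w : is_series a v -> v = w -> is_series a w.
Proof. intros; subst; auto. Qed.

Lemma is_series_sm (f : nat -> nat -> R) (l : nat -> R) M :
  (forall i, (i < M)%nat -> is_series (f i) (l i)) ->
  is_series (fun k => sm (fun i => f i k) M) (sm l M).
Proof.
  induction M; intros h; simpl.
  - apply is_series_ext with (fun k => scal 0 ((1 / 2) ^ k)).
    intro k. unfold scal; simpl; unfold mult; simpl; ring.
    eapply ser_eq. apply (is_series_scal_l 0 (fun k => (1/2)^k)). apply is_series_geom. rewrite Rabs_pos_eq; lra.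
    unfold scal; simpl; unfold mult; simpl; ring.
  - apply (is_series_plus (fun k => sm (fun i => f i k) M) (f M)).
    apply IHM; auto. apply h; lia.
Qed.

Lemma zero_sum (g : nat -> R) : infinite_sum (fun k => g k * 0) 0.
Proof.
  apply is_series_Reals.
  apply is_series_ext with (fun k => scal 0 ((1 / 2) ^ k)).
  intro k. unfold scal; simpl; unfold mult; simpl; ring.
  eapply ser_eq. apply (is_series_scal_l 0 (fun k => (1/2)^k)). apply is_series_geom. rewrite Rabs_pos_eq; lra.
  unfold scal; simpl; unfold mult; simpl; ring.
Qed.

Lemma sm_mul f g M N : sm f M * sm g N = sm (fun i => sm (fun j => f i * g j) N) M.
Proof.
  rewrite <- sm_mult_r. apply sm_ext. intros i _. rewrite <- sm_scal. reflexivity.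
Qed.

Lemma H_polar' q m n r th :
  qHermite2D q m n (r * cos th, r * sin th) (Cconj (r * cos th, r * sin th)) =
  (hp (cc q m n) m n r * cos ((INR m - INR n) * th), hp (cc q m n) m n r * sin ((INR m - INR n) * th)).
Proof. exact (H_polar q m n r th). Qed.

Lemma integrand q m n s t k th :
  (fun z => Cmul (qHermite2D q m n z (Cconj z)) (Cconj (qHermite2D q s t z (Cconj z)))) (zpt q k th) =
  (hp (cc q m n) m n (Rpower q (INR k / 2)) * hp (cc q s t) s t (Rpower q (INR k / 2)) * cos (((INR m - INR n) - (INR s - INR t)) * th),
   hp (cc q m n) m n (Rpower q (INR k / 2)) * hp (cc q s t) s t (Rpower q (INR k / 2)) * sin (((INR m - INR n) - (INR s - INR t)) * th)).
Proof.
  unfold zpt. cbv beta. rewrite !H_polar'. rewrite prod_conj.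
  f_equal; f_equal; f_equal; ring.
Qed.

Lemma r2 q k : 0 < q -> Rpower q (INR k / 2) ^ 2 = q ^ k.
Proof.
  intros hq. simpl. rewrite Rmult_1_r. rewrite <- Rpower_plus.
  replace (INR k / 2 + INR k / 2) with (INR k) by field. apply Rpower_pow; auto.
Qed.

Theorem theorem3p3 (q : R) (hq0 : 0 < q) (hq1 : q < 1) (m n s t : nat) :
  exists qinf : R, qpoch_inf q qinf /\
    mu_integral q
      (fun z => Cmul (qHermite2D q m n z (Cconj z))
                     (Cconj (qHermite2D q s t z (Cconj z))))
      (q ^ (m * n) * qpoch q q m * qpoch q q n / qinf * kron m s * kron n t, 0).
Proof.
  exists (/ Fser q q). split. exact (qpoch_lim q hq0 hq1).
  assert (hF := Fq_ge1 q hq0 hq1).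
  set (P := fun k : nat => hp (cc q m n) m n (Rpower q (INR k / 2)) * hp (cc q s t) s t (Rpower q (INR k / 2))).
  set (e := (INR m - INR n) - (INR s - INR t)).
  assert (hext : forall k, (fun th => (fun z => Cmul (qHermite2D q m n z (Cconj z)) (Cconj (qHermite2D q s t z (Cconj z)))) (zpt q k th))
            = fun th => (P k * cos (e * th), P k * sin (e * th))).
  { intro k. apply functional_extensionality. intro th. apply integrand. }
  destruct (Nat.eq_dec (m + t) (n + s)) as [heq|hne].
  - assert (he : e = 0).
    { unfold e. assert (h := f_equal INR heq). rewrite !plus_INR in h. lra. }
    exists (fun k => (P k, 0)). split; [|split].
    + intro k. rewrite hext. rewrite he. apply am_zero.
    + simpl fst. apply is_series_Reals.
      apply is_series_ext with (fun k => sm (fun i => sm (fun j => scal (cc q m n i * cc q s t j) (Eterm q (q ^ S (m + t - i - j)) k)) (S (Nat.min s t))) (S (Nat.min m n))).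
      { intro k. unfold P, hp. rewrite sm_mul. rewrite <- sm_scal. apply sm_ext. intros i hi.
        rewrite <- sm_scal. apply sm_ext. intros j hj.
        unfold scal; simpl; unfold mult; simpl. unfold Eterm.
        set (r := Rpower q (INR k / 2)).
        assert (key : r ^ (m - i) * r ^ (n - i) * (r ^ (s - j) * r ^ (t - j)) = (q ^ k) ^ (m + t - i - j)).
        { rewrite <- !pow_add. replace (m - i + (n - i) + (s - j + (t - j)))%nat with (2 * (m + t - i - j))%nat by lia.
          rewrite pow_mult. unfold r. rewrite r2; auto. }
        replace ((q * q ^ (m + t - i - j)) ^ k) with (q ^ k * (q ^ k) ^ (m + t - i - j)).
        2:{ change (q * q ^ (m + t - i - j)) with (q ^ S (m + t - i - j)). rewrite <- !pow_mult. rewrite <- pow_add. f_equal. lia. }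
        rewrite <- key. field. apply Rgt_not_eq, qpoch_pos; auto. }
      eapply ser_eq.
      { apply is_series_sm. intros i hi. apply is_series_sm. intros j hj.
        apply (is_series_scal_l (cc q m n i * cc q s t j) (Eterm q (q ^ S (m + t - i - j)))).
        apply F_correct; auto. split. apply pow_lt; auto.
        assert (0 < q ^ (m + t - i - j) <= 1) by (apply qpow_bnd; auto). simpl. nra. }
      transitivity (Fin q m n s t * Fser q q).
      { unfold Fin. rewrite <- sm_mult_r. apply sm_ext. intros i hi. rewrite <- sm_mult_r. apply sm_ext. intros j hj.
        unfold scal; simpl; unfold mult; simpl.
        replace (Fser q (q * q ^ (m + t - i - j))) with (Gser q (m + t - i - j)) by reflexivity.
        rewrite G_rec; auto. ring. }
      rewrite Fin_val; auto. change (@eq R (q ^ (m * n) * qpoch q q m * qpoch q q n * kron m s * kron n t * Fser q q) (q ^ (m * n) * qpoch q q m * qpoch q q n / / Fser q q * kron m s * kron n t)). field. lra.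
    + simpl snd. apply zero_sum.
  - exists (fun k => (0, 0)). split; [|split].
    + intro k. rewrite hext.
      replace e with (IZR (Z.of_nat m - Z.of_nat n - (Z.of_nat s - Z.of_nat t))).
      2:{ unfold e. rewrite !minus_IZR, <- !INR_IZR_INZ. reflexivity. }
      apply am_nonzero. intro h. apply eq_IZR in h. lia.
    + simpl fst. replace (q ^ (m * n) * qpoch q q m * qpoch q q n / / Fser q q * kron m s * kron n t) with 0.
      apply zero_sum.
      unfold kron. destruct (Nat.eqb_spec m s); destruct (Nat.eqb_spec n t); try ring. lia.
    + simpl snd. apply zero_sum.
Qed.
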